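(* Let $N(\Theta,\mathbf{X})\in\mathbb{R}^M$ be a neural network with weight vector $\Theta\in\mathbb{R}^n$, evaluated on a fixed training dataset $\mathbf{X}$ of $M$ players, whose $i$-th output $N(\Theta,\mathbf{X})_i=\hat d_i$ is the predicted required difficulty for player $i$. Let $d_1,\dots,d_M\in\mathbb{R}$ be the given (actual) difficulties, $P\in[0,1]$ a desired completion rate and $\delta\ge 0$ a tolerance. Let $\mathcal{M}\subseteq\mathbb{R}^n$ be the set of weights that are local minima of the network's training loss, and let $$\mathcal{C}=\Bigl\{\Theta\in\mathbb{R}^n : \Bigl|\tfrac{1}{M}\textstyle\sum_{i=1}^{M}\mathbb{1}[d_i\ge N(\Theta,\mathbf{X})_i]-P\Bigr|\le\delta\Bigr\},$$ where $\mathbb{1}[\cdot]$ equals $1$ if its argument is true and $0$ otherwise. Assume $\mathcal{M}$ and $\mathcal{C}$ are nonempty and define the projection operators $$\mathcal{P}_{\mathcal{M}}\Theta\in\operatorname{argmin}_{\hat\Theta\in\mathcal{M}}\|\Theta-\hat\Theta\|_2,\qquad \mathcal{P}_{\mathcal{C}}\Theta\in\operatorname{argmin}_{\hat\Theta\in\mathcal{C}}\|\Theta-\hat\Theta\|_2$$ (i.e. each returns a closest point of the respective set, assumed to exist). Starting from an arbitrary initial weight vector $\Theta_1^C$, define for $i\ge1$ the alternating scheme $$\Theta_i^M\leftarrow\mathcal{P}_{\mathcal{M}}\Theta_i^C,\qquad \Theta_{i+1}^C\leftarrow\mathcal{P}_{\mathcal{C}}\Theta_i^M.$$ Then the sequence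 of distances $\|\Theta_i^C-\Theta_i^M\|_2$ converges.
   Context: This is set in a dynamic difficulty adjustment problem: a neural network outputs a required difficulty $\hat d_i$ for each player $i$, trained to minimize a loss (the local minima of which form $\mathcal{M}$), subject to a completion rate constraint requiring that the fraction of players with $d_i\ge\hat d_i$ equal the target $P$ up to tolerance $\delta$ (the set $\mathcal{C}$). $\|\cdot\|_2$ is the Euclidean norm on weight space. *)

(* Defs.v *)
From mathcomp Require Import all_boot all_order all_algebra.
From mathcomp Require Import all_classical all_reals all_analysis.
Set Implicit Arguments. Unset Strict Implicit. Unset Printing Implicit Defensive.
Import Order.TTheory GRing.Theory Num.Theory.
Local Open Scope classical_set_scope.
Local Open Scope ring_scope.

Definition norm2 (R : realType) (n : nat) (v : 'rV[R]_n) : R :=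
  Num.sqrt (\sum_(j < n) v ord0 j ^+ 2).

Definition local_minima (R : realType) (n : nat) (L : 'rV[R]_n -> R)
  : set 'rV[R]_n :=
  [set th | exists2 e : R, 0 < e &
     forall th', norm2 (th' - th) < e -> L th <= L th'].

(* The completion-rate constraint set C. N th is the network output
   N(th, X) in R^M (X fixed), d the actual difficulties. *)
Definition completion_set (R : realType) (n M : nat)
  (N : 'rV[R]_n -> 'rV[R]_M) (d : 'rV[R]_M) (P delta : R) : set 'rV[R]_n :=
  [set th | `| (\sum_(i < M) (if N th ord0 i <= d ord0 i then 1 else 0)) / M%:R
               - P | <= delta].

Definition is_projection (R : realType) (n : nat) (S : set 'rV[R]_n)
  (p : 'rV[R]_n -> 'rV[R]_n) : Prop :=
  forall th, S (p th) /\ forall th', S th' -> norm2 (th - p th) <= norm2 (th - th').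

(* alt_C PM PC th1 k = Theta^C_{k+1}; Theta^M_{k+1} = PM (alt_C PM PC th1 k). *)
Fixpoint alt_C (T : Type) (PM PC : T -> T) (th1 : T) (k : nat) : T :=
  match k with
  | 0 => th1
  | k'.+1 => PC (PM (alt_C PM PC th1 k'))
  end.

(* Main.v *)
Require Import Defs.
From mathcomp Require Import all_boot all_order all_algebra.
From mathcomp Require Import all_classical all_reals all_analysis.
Import Order.TTheory GRing.Theory Num.Theory numFieldNormedType.Exports.
Local Open Scope classical_set_scope.
Local Open Scope ring_scope.

Lemma norm2_sym (R : realType) (n : nat) (a b : 'rV[R]_n) :
  norm2 (a - b) = norm2 (b - a).
Proof.
rewrite /norm2; congr Num.sqrt; apply: eq_bigr => j _.
by rewrite !mxE -sqrrN opprB.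
Qed.

Theorem proposition1 (R : realType) (n M : nat)
  (N : 'rV[R]_n -> 'rV[R]_M) (d : 'rV[R]_M) (P delta : R)
  (L : 'rV[R]_n -> R) (PM PC : 'rV[R]_n -> 'rV[R]_n) (th1 : 'rV[R]_n) :
  0 <= P <= 1 -> 0 <= delta ->
  local_minima L !=set0 ->
  completion_set N d P delta !=set0 ->
  is_projection (local_minima L) PM ->
  is_projection (completion_set N d P delta) PC ->
  cvgn (fun k => norm2 (alt_C PM PC th1 k - PM (alt_C PM PC th1 k))).
Proof.
move=> _ _ _ _ hM hC.
set u := fun k => _.
have dec : nonincreasing_seq (fun k => u k.+1).
  apply/nonincreasing_seqP => k.
  rewrite /u /=.
  set c := PC (PM (alt_C PM PC th1 k)).
  have Cc : completion_set N d P delta c by case: (hC (PM (alt_C PM PC th1 k))).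
  apply: (le_trans (proj2 (hM (PC (PM c))) (PM c) (proj1 (hM c)))).
  rewrite norm2_sym [X in _ <= X]norm2_sym.
  exact: (proj2 (hC (PM c)) c Cc).
have lb : has_lbound (range (fun k => u k.+1)).
  by exists 0 => _ [k _ <-]; exact: sqrtr_ge0.
have cv := nonincreasing_is_cvgn dec lb.
apply/cvg_ex; exists (limn (fun k => u k.+1)).
by rewrite -cvg_shiftS.
Qed.
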